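(* Let $F:\mathcal{C}\to\mathcal{D}$ be left adjoint to $G:\mathcal{D}\to\mathcal{C}$, with unit $\eta:1_{\mathcal{C}}\to GF$ and counit $\varepsilon:FG\to 1_{\mathcal{D}}$. 1. $F$ is naturally full if and only if there exists a natural transformation $\nu:GF\to 1_{\mathcal{C}}$ such that $\eta_C\circ\nu_C=\mathrm{id}_{GFC}$ for all $C\in\mathcal{C}$. In this case, $\varepsilon_{FC}$ is an isomorphism in $\mathcal{D}$ with inverse $F(\eta_C)$, for every $C\in\mathcal{C}$. 2. $G$ is naturally full if and only if there exists a natural transformation $\xi:1_{\mathcal{D}}\to FG$ such that $\xi_D\circ\varepsilon_D=\mathrm{id}_{FGD}$ for all $D\in\mathcal{D}$. In this case, $G(\varepsilon_D)$ is an isomorphism in $\mathcal{C}$ with inverse $\eta_{GD}$, for every $D\in\mathcal{D}$.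
   Context: For a functor $F:\mathcal{A}\to\mathcal{B}$, let $\mathcal{F}:\mathrm{Hom}_{\mathcal{A}}(\bullet,\bullet)\to\mathrm{Hom}_{\mathcal{B}}(F(\bullet),F(\bullet))$, $\mathcal{F}_{A,A'}(f)=F(f)$. $F$ is called naturally full if there is a natural transformation $\mathcal{P}:\mathrm{Hom}_{\mathcal{B}}(F(\bullet),F(\bullet))\to\mathrm{Hom}_{\mathcal{A}}(\bullet,\bullet)$ (natural in both variables: $\mathcal{P}_{X,T}(F(h)\circ g\circ F(f))=h\circ\mathcal{P}_{Y,Z}(g)\circ f$) such that $F(\mathcal{P}_{A,A'}(u))=u$ for all $A,A'$ and all $u:F(A)\to F(A')$. *)

(* Defs.v *)
(* Composition: comp g f = g o f. *)

Set Implicit Arguments.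

Record Category := {
  Ob :> Type;
  Hom : Ob -> Ob -> Type;
  comp : forall {A B C : Ob}, Hom B C -> Hom A B -> Hom A C;
  idm : forall A : Ob, Hom A A;
  comp_assoc : forall (A B C D : Ob) (h : Hom C D) (g : Hom B C) (f : Hom A B),
      comp h (comp g f) = comp (comp h g) f;
  comp_id_l : forall (A B : Ob) (f : Hom A B), comp (idm B) f = f;
  comp_id_r : forall (A B : Ob) (f : Hom A B), comp f (idm A) = f
}.

Arguments Hom {c} _ _.
Arguments comp {c A B C} _ _.
Arguments idm {c} _.

Record Functor (C D : Category) := {
  fobj :> Ob C -> Ob D;
  fmap : forall {A B : Ob C}, Hom A B -> Hom (fobj A) (fobj B);
  fmap_id : forall A : Ob C, fmap (idm A) = idm (fobj A);
  fmap_comp : forall (A B E : Ob C) (g : Hom B E) (f : Hom A B),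
      fmap (comp g f) = comp (fmap g) (fmap f)
}.

Arguments fmap {C D} _ {A B} _.

Definition is_natural {C D : Category} (F G : Functor C D)
  (alpha : forall X : Ob C, Hom (F X) (G X)) : Prop :=
  forall (X Y : Ob C) (f : Hom X Y),
    comp (alpha Y) (fmap F f) = comp (fmap G f) (alpha X).

(* F is naturally full: there is a natural (in both variables) section
   P of the map Hom(A,A') -> Hom(FA,FA'), f |-> F f. *)
Definition naturally_full {C D : Category} (F : Functor C D) : Prop :=
  exists P : forall A A' : Ob C, Hom (F A) (F A') -> Hom A A',
    (forall (X Y Z T : Ob C) (f : Hom X Y) (g : Hom (F Y) (F Z)) (h : Hom Z T),
        P X T (comp (fmap F h) (comp g (fmap F f))) = comp h (comp (P Y Z g) f))
    /\ (forall (A A' : Ob C) (u : Hom (F A) (F A')), fmap F (P A A' u) = u).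

Definition is_adjunction {C D : Category} (F : Functor C D) (G : Functor D C)
  (eta : forall X : Ob C, Hom X (G (F X)))
  (eps : forall Y : Ob D, Hom (F (G Y)) Y) : Prop :=
  (forall (X X' : Ob C) (f : Hom X X'),
      comp (eta X') f = comp (fmap G (fmap F f)) (eta X))
  /\ (forall (Y Y' : Ob D) (g : Hom Y Y'),
      comp (eps Y') (fmap F (fmap G g)) = comp g (eps Y))
  /\ (forall X : Ob C, comp (eps (F X)) (fmap F (eta X)) = idm (F X))
  /\ (forall Y : Ob D, comp (fmap G (eps Y)) (eta (G Y)) = idm (G Y)).

(* Main.v *)
Require Import Defs.

Ltac asl := repeat rewrite comp_assoc.

Theorem theorem2p6 (C D : Category) (F : Functor C D) (G : Functor D C)
  (eta : forall X : Ob C, Hom X (G (F X)))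
  (eps : forall Y : Ob D, Hom (F (G Y)) Y)
  (adj : is_adjunction F G eta eps) :
  (* Part 1 *)
  ((naturally_full F <->
     exists nu : forall X : Ob C, Hom (G (F X)) X,
       (forall (X X' : Ob C) (f : Hom X X'),
          comp (nu X') (fmap G (fmap F f)) = comp f (nu X))
       /\ (forall X : Ob C, comp (eta X) (nu X) = idm (G (F X))))
   /\ (naturally_full F ->
       forall X : Ob C,
         comp (eps (F X)) (fmap F (eta X)) = idm (F X)
         /\ comp (fmap F (eta X)) (eps (F X)) = idm (F (G (F X)))))
  /\
  (* Part 2 *)
  ((naturally_full G <->
     exists xi : forall Y : Ob D, Hom Y (F (G Y)),
       (forall (Y Y' : Ob D) (g : Hom Y Y'),
          comp (xi Y') g = comp (fmap F (fmap G g)) (xi Y))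
       /\ (forall Y : Ob D, comp (xi Y) (eps Y) = idm (F (G Y))))
   /\ (naturally_full G ->
       forall Y : Ob D,
         comp (fmap G (eps Y)) (eta (G Y)) = idm (G Y)
         /\ comp (eta (G Y)) (fmap G (eps Y)) = idm (G (F (G Y))))).
Proof.
  destruct adj as [etaN [epsN [tri1 tri2]]].
  assert (P1 : naturally_full F <->
     exists nu : forall X : Ob C, Hom (G (F X)) X,
       (forall (X X' : Ob C) (f : Hom X X'),
          comp (nu X') (fmap G (fmap F f)) = comp f (nu X))
       /\ (forall X : Ob C, comp (eta X) (nu X) = idm (G (F X)))).
  { split.
    - intros [P [Pn Ps]].
      exists (fun X => P (G (F X)) X (eps (F X))). split.
      + intros X X' f.
        pose proof (Pn _ _ _ _ (fmap G (fmap F f)) (eps (F X')) (idm X')) as H.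
        rewrite fmap_id, comp_id_l, comp_id_l, epsN in H.
        rewrite <- H.
        pose proof (Pn _ _ _ _ (idm (G (F X))) (eps (F X)) f) as H2.
        rewrite fmap_id, comp_id_r, comp_id_r in H2. exact H2.
      + intros X. rewrite etaN, Ps. apply tri2.
    - intros [nu [nuN nuS]].
      assert (Fnu : forall X, fmap F (nu X) = eps (F X)).
      { intros X.
        transitivity (comp (eps (F X)) (fmap F (comp (eta X) (nu X)))).
        + rewrite fmap_comp, comp_assoc, tri1, comp_id_l. reflexivity.
        + rewrite nuS, fmap_id, comp_id_r. reflexivity. }
      exists (fun A A' u => comp (nu A') (comp (fmap G u) (eta A))). split.
      + intros X Y Z T f g h.
        rewrite !fmap_comp. asl. rewrite nuN.
        rewrite <- !comp_assoc. f_equal. f_equal. f_equal. f_equal.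
        symmetry. apply etaN.
      + intros A A' u. rewrite !fmap_comp, Fnu. asl. rewrite epsN.
        rewrite <- comp_assoc, tri1, comp_id_r. reflexivity. }
  assert (P2 : naturally_full G <->
     exists xi : forall Y : Ob D, Hom Y (F (G Y)),
       (forall (Y Y' : Ob D) (g : Hom Y Y'),
          comp (xi Y') g = comp (fmap F (fmap G g)) (xi Y))
       /\ (forall Y : Ob D, comp (xi Y) (eps Y) = idm (F (G Y)))).
  { split.
    - intros [P [Pn Ps]].
      exists (fun Y => P Y (F (G Y)) (eta (G Y))). split.
      + intros Y Y' g.
        pose proof (Pn _ _ _ _ g (eta (G Y')) (idm _)) as H.
        rewrite fmap_id, comp_id_l, comp_id_l, etaN in H.
        rewrite <- H.
        pose proof (Pn _ _ _ _ (idm Y) (eta (G Y)) (fmap F (fmap G g))) as H2.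
        rewrite fmap_id, comp_id_r, comp_id_r in H2. exact H2.
      + intros Y. rewrite <- epsN, Ps. apply tri1.
    - intros [xi [xiN xiS]].
      assert (Gxi : forall Y, fmap G (xi Y) = eta (G Y)).
      { intros Y.
        transitivity (comp (fmap G (comp (xi Y) (eps Y))) (eta (G Y))).
        + rewrite fmap_comp, <- comp_assoc, tri2, comp_id_r. reflexivity.
        + rewrite xiS, fmap_id, comp_id_l. reflexivity. }
      exists (fun A A' u => comp (eps A') (comp (fmap F u) (xi A))). split.
      + intros X Y Z T f g h.
        rewrite !fmap_comp. asl. rewrite epsN.
        rewrite <- !comp_assoc. f_equal. f_equal. f_equal. 
        symmetry. apply xiN.
      + intros A A' u. rewrite !fmap_comp, Gxi. rewrite <- etaN.
        rewrite comp_assoc, tri2, comp_id_l. reflexivity. }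
  split; split; try assumption.
  - intros H X. split; [apply tri1|].
    destruct (proj1 P1 H) as [nu [nuN nuS]].
    assert (Fnu : fmap F (nu X) = eps (F X)).
    { transitivity (comp (eps (F X)) (fmap F (comp (eta X) (nu X)))).
      + rewrite fmap_comp, comp_assoc, tri1, comp_id_l. reflexivity.
      + rewrite nuS, fmap_id, comp_id_r. reflexivity. }
    rewrite <- Fnu, <- fmap_comp, nuS, fmap_id. reflexivity.
  - intros H Y. split; [apply tri2|].
    destruct (proj1 P2 H) as [xi [xiN xiS]].
    assert (Gxi : fmap G (xi Y) = eta (G Y)).
    { transitivity (comp (fmap G (comp (xi Y) (eps Y))) (eta (G Y))).
      + rewrite fmap_comp, <- comp_assoc, tri2, comp_id_r. reflexivity.
      + rewrite xiS, fmap_id, comp_id_l. reflexivity. }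
    rewrite <- Gxi, <- fmap_comp, xiS, fmap_id. reflexivity.
Qed.
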